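(* For all integers $i\geq 1$, \[ v_3(a_i-1)=\begin{cases} 0, & i\equiv 0,4,5,7 \pmod 8;\\ v_3(i-1)+1, & i\equiv 1\pmod 8;\\ v_3(i+2)+1, & i\equiv 6 \pmod 8;\\ v_3(i-2)+2, & i\equiv 2\pmod{24};\\ 2, & i\equiv 10\pmod{24};\\ v_3\big((i+6)(i+30)\big)+2, & i\equiv 18\pmod{24};\\ v_3(i-3)+2, & i\equiv 3\pmod{24};\\ v_3(i+13)+2, & i\equiv 11\pmod{24};\\ v_3(i+5)+2, & i\equiv 19\pmod{24}. \end{cases} \]
   Context: The Narayana sequence $(a_n)_{n\geq 0}$ is defined by $a_0=0$, $a_1=a_2=1$ and $a_n=a_{n-1}+a_{n-3}$ for all $n\geq 3$. For an integer $x$, $v_3(x)$ denotes the $3$-adic valuation of $x$ (the exponent of the largest power of $3$ dividing $x$), with the convention $v_3(0)=+\infty$. *)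

(* Defs.v *)
From mathcomp Require Import all_boot all_order all_algebra.
Set Implicit Arguments. Unset Strict Implicit. Unset Printing Implicit Defensive.
Import GRing.Theory Num.Theory.

(* narayana_triple n = (a_n, a_(n+1), a_(n+2)) *)
Fixpoint narayana_triple (n : nat) : nat * nat * nat :=
  match n with
  | 0 => (0, 1, 1)
  | k.+1 => let: (x, y, z) := narayana_triple k in (y, z, z + x)
  end.

Definition narayana (n : nat) : nat := (narayana_triple n).1.1.

(* 3-adic valuation of an integer, with v3 0 = +oo encoded as None. *)
Definition v3 (x : int) : option nat :=
  if x == 0 then None else Some (logn 3 `|x|%N).

Definition vadd (v : option nat) (k : nat) : option nat :=
  match v with None => None | Some e => Some (e + k)%N end.

(* Main.v *)
Require Import Defs.
From mathcomp Require Import all_boot all_order all_algebra.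
From mathcomp Require Import ring zify.
Import GRing.Theory Num.Theory.
Local Open Scope ring_scope.

Lemma binom_iter (V : zmodType) (L D : V -> V)
  (Dadd : forall a b, D (a + b) = D a + D b) (hL : forall w, L w = w + D w) (v : V) n :
  iter n L v = \sum_(j < n.+1) iter j D v *+ 'C(n, j).
Proof.
have D0 : D 0 = 0.
  by move: (Dadd 0 0); rewrite addr0 => h; apply: (addrI (D 0)); rewrite addr0 -h.
have Dmorph : {morph D : x y / x + y >-> x + y} by [].
elim: n => [|n IH]; first by rewrite big_ord_recl big_ord0 /= addr0.
rewrite iterS IH hL.
have -> : D (\sum_(j < n.+1) iter j D v *+ 'C(n, j)) =
          \sum_(j < n.+1) iter j.+1 D v *+ 'C(n, j).
  rewrite (big_morph D Dmorph D0); apply: eq_bigr => j _.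
  elim: ('C(n, j)) => [|k IHk]; first by rewrite !mulr0n.
  by rewrite !mulrS Dmorph IHk.
rewrite [RHS]big_ord_recl.
have -> : \sum_(i < n.+1) iter (lift ord0 i) D v *+ 'C(n.+1, lift ord0 i) =
   \sum_(j < n.+1) iter j.+1 D v *+ 'C(n, j.+1) + \sum_(j < n.+1) iter j.+1 D v *+ 'C(n, j).
  by rewrite -big_split; apply: eq_bigr => j _; rewrite /bump /= binS mulrnDr.
rewrite addrA; congr (_ + _).
rewrite big_ord_recl [in RHS]big_ord_recr /= (bin_small (ltnSn n)) mulr0n addr0 !bin0.
by congr (_ + _); apply: eq_bigr => j _; rewrite /bump /=.
Qed.

Definition V3 := (int * int * int)%type.
Definition stp (w : V3) : V3 := (w.1.2, w.2, w.2 + w.1.1).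
Definition T n (w : V3) := iter n stp w.
Definition sc (k : int) (w : V3) : V3 := (k * w.1.1, k * w.1.2, k * w.2).

Lemma nar_T i : (narayana i)%:Z = (T i (0,1,1)).1.1.
Proof.
suff : forall i, T i (0,1,1) = ((narayana_triple i).1.1%:Z, (narayana_triple i).1.2%:Z, (narayana_triple i).2%:Z).
  by move=> ->.
elim=> [|k IH] //=.
rewrite /T /= -/(T k _) IH /stp /=.
by case: (narayana_triple k) => [[x y] z] /=; rewrite PoszD.
Qed.

Lemma addV3 (x1 y1 z1 x2 y2 z2 : int) :
  ((x1, y1, z1) : V3) + (x2, y2, z2) = (x1 + x2, y1 + y2, z1 + z2).
Proof. by []. Qed.

Lemma fst_sum (I : Type) (r : seq I) (F : I -> V3) :
  (\sum_(j <- r) F j).1.1 = \sum_(j <- r) (F j).1.1.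
Proof. by apply: (big_morph (fun w : V3 => w.1.1)). Qed.

Lemma fst_muln (w : V3) k : (w *+ k).1.1 = w.1.1 *+ k.
Proof. by elim: k => [|k IH] //; rewrite !mulrS /= IH. Qed.

Lemma expand s t (Cf : V3 -> V3)
  (hT : forall w, T s w = w + sc (3 ^+ t) (Cf w))
  (hCadd : forall a b, Cf (a + b) = Cf a + Cf b)
  (hCsc : forall c w, Cf (sc c w) = sc c (Cf w)) v n :
  (T (s * n) v).1.1 = \sum_(j < n.+1) (3 ^+ (t * j) * (iter j Cf v).1.1) *+ 'C(n, j).
Proof.
have -> : T (s * n) v = iter n (T s) v by rewrite /T mulnC iterM.
rewrite (@binom_iter _ _ (fun w => sc (3 ^+ t) (Cf w)) _ hT); last first.
  move=> a b; rewrite hCadd; case: (Cf a) => [[??]?]; case: (Cf b) => [[??]?].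
  by rewrite /sc /= !addV3; congr (_, _, _); ring.
rewrite fst_sum; apply: eq_bigr => j _; rewrite fst_muln; congr (_ *+ _).
suff -> : iter j (fun w => sc (3 ^+ t) (Cf w)) v = sc (3 ^+ (t * j)) (iter j Cf v) by [].
elim: (nat_of_ord j) => [|k IH].
  by rewrite /sc /=; case: v => [[??]?] /=; rewrite muln0 expr0 !mul1r.
rewrite [LHS]/= IH hCsc [in RHS]/= /sc /=; case: (Cf _) => [[??]?] /=.
by rewrite mulnS exprD; congr (_, _, _); ring.
Qed.

Definition Cf8 (w : V3) : V3 :=
  let: (x, y, z) := w in (x + y + 2 * z, 2 * x + y + 3 * z, 3 * x + 2 * y + 4 * z).
Definition Cf24 (w : V3) : V3 :=
  let: (x, y, z) := w in
  (208 * x + 142 * y + 305 * z, 305 * x + 208 * y + 447 * z, 447 * x + 305 * y + 655 * z).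

Lemma T8 w : T 8 w = w + sc (3 ^+ 1) (Cf8 w).
Proof. case: w => [[x y] z]; rewrite /T /stp /= /sc /= addV3; congr (_, _, _); ring. Qed.

Lemma T24 w : T 24 w = w + sc (3 ^+ 2) (Cf24 w).
Proof. case: w => [[x y] z]; rewrite /T /stp /= /sc /= addV3; congr (_, _, _); ring. Qed.

Lemma Cf8_add a b : Cf8 (a + b) = Cf8 a + Cf8 b.
Proof. case: a => [[??]?]; case: b => [[??]?]; rewrite addV3 /= addV3; congr (_, _, _); ring. Qed.
Lemma Cf24_add a b : Cf24 (a + b) = Cf24 a + Cf24 b.
Proof. case: a => [[??]?]; case: b => [[??]?]; rewrite addV3 /= addV3; congr (_, _, _); ring. Qed.
Lemma Cf8_sc c w : Cf8 (sc c w) = sc c (Cf8 w).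
Proof. case: w => [[??]?]; rewrite /sc /=; congr (_, _, _); ring. Qed.
Lemma Cf24_sc c w : Cf24 (sc c w) = sc c (Cf24 w).
Proof. case: w => [[??]?]; rewrite /sc /=; congr (_, _, _); ring. Qed.

Lemma pow3_ge l : (2 * l + 1 <= 3 ^ l)%N.
Proof. elim: l => [|l IH] //; rewrite expnS; lia. Qed.

Lemma logn_small j : (2 <= j)%N -> (logn 3 j + 2 <= j)%N.
Proof.
move=> hj; have hle : (3 ^ logn 3 j <= j)%N.
  by apply: dvdn_leq; [lia | exact: pfactor_dvdnn].
have := pow3_ge (logn 3 j); case: (logn 3 j) hle => [|l]; lia.
Qed.

Lemma logn_ge_dvd k m : (0 < m)%N -> (3 ^ k %| m)%N -> (k <= logn 3 m)%N.
Proof. by move=> hm; rewrite pfactor_dvdn. Qed.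

Lemma key_lin t e k n j : (2 <= j)%N -> (3 ^ k %| n)%N -> (t + e + 1 + j <= t * j + 2)%N ->
  (3 ^ (k + t + e + 1) %| 'C(n, j) * 3 ^ (t * j))%N.
Proof.
move=> hj hk ht.
have [C0|Cpos] := posnP 'C(n, j); first by rewrite C0 mul0n dvdn0.
have hjC : (j * 'C(n, j) = n * 'C(n.-1, j.-1))%N.
  by case: j hj {ht} Cpos => [|j'] // _ _; rewrite mul_bin_diag.
have h1 : (k <= logn 3 j + logn 3 'C(n, j))%N.
  rewrite -lognM; [|lia|lia]; apply: logn_ge_dvd; first by rewrite muln_gt0; lia.
  by rewrite hjC; apply: dvdn_mulr.
have h2 := @logn_small j hj.
rewrite pfactor_dvdn //; last by rewrite muln_gt0 Cpos expn_gt0.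
rewrite lognM // ?expn_gt0 // pfactorK //.
nia.
Qed.

Lemma key_quad k n j : (3 <= j)%N -> (3 ^ k %| n * n.-1)%N ->
  (3 ^ (k + 5) %| 'C(n, j) * 3 ^ (2 * j))%N.
Proof.
move=> hj hk.
have [C0|Cpos] := posnP 'C(n, j); first by rewrite C0 mul0n dvdn0.
have hjC : (j.-1 * (j * 'C(n, j)) = n * n.-1 * 'C(n.-2, j.-2))%N.
  case: j hj Cpos => [|[|[|j']]] // _ _.
  by rewrite -mul_bin_diag mulnCA -mul_bin_diag mulnA.
have h1 : (k <= logn 3 j.-1 + (logn 3 j + logn 3 'C(n, j)))%N.
  rewrite -lognM; [|lia|lia]; rewrite -lognM; [|lia|rewrite muln_gt0; lia].
  apply: logn_ge_dvd; first by rewrite !muln_gt0; lia.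
  by rewrite hjC; apply: dvdn_mulr.
have h2 := @logn_small j ltac:(lia).
have h3 := @logn_small j.-1 ltac:(lia).
rewrite pfactor_dvdn //; last by rewrite muln_gt0 Cpos expn_gt0.
rewrite lognM // ?expn_gt0 // pfactorK //.
lia.
Qed.

Lemma val_split M (a w b : int) : ~~ (3 %| w)%Z -> (3 ^+ M.+1 %| b)%Z ->
  a = 3 ^+ M * w + b -> a != 0 /\ logn 3 `|a| = M.
Proof.
move=> hw hb ha.
have h1 : (3 ^+ M %| a)%Z.
  rewrite ha; apply: rpredD; first by apply: dvdz_mulr; exact: dvdzz.
  by apply: dvdz_trans hb; apply: dvdz_exp2l.
have h2 : ~~ (3 ^+ M.+1 %| a)%Z.
  apply/negP => h.
  have : (3 ^+ M.+1 %| 3 ^+ M * w)%Z.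
    by rewrite (_ : 3 ^+ M * w = a - b); [apply: rpredB | rewrite ha; ring].
  by rewrite exprSr dvdz_mul2l ?expf_neq0 // (negbTE hw).
have a0 : a != 0 by apply/eqP => a0; move: h2; rewrite a0 dvdz0.
split=> //.
have apos : (0 < `|a|)%N by rewrite absz_gt0.
move: h1 h2; rewrite !dvdzE !abszX (_ : `|3|%N = 3%N) // !pfactor_dvdn //; lia.
Qed.

Lemma pow3_nat k : (3 ^ k)%N%:Z = 3 ^+ k.
Proof. by rewrite -natz natrX. Qed.

Lemma term_eq t (y : nat -> int) n j :
  (3 ^+ (t * j) * y j) *+ 'C(n, j) = (('C(n, j) * 3 ^ (t * j))%N)%:Z * y j.
Proof. by rewrite -mulr_natr PoszM pow3_nat; ring. Qed.

Lemma term_div t (y : nat -> int) n j d :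
  (d %| 'C(n, j) * 3 ^ (t * j))%N -> (d%:Z %| (3 ^+ (t * j) * y j) *+ 'C(n, j))%Z.
Proof. by move=> h; rewrite term_eq; apply: dvdz_mulr; rewrite dvdzE !absz_nat. Qed.

Lemma tail_div t (y : nat -> int) n m d :
  (forall j, (m <= j)%N -> (d %| 'C(n, j) * 3 ^ (t * j))%N) ->
  (d%:Z %| \sum_(m <= j < n.+1) (3 ^+ (t * j) * y j) *+ 'C(n, j))%Z.
Proof.
move=> h; rewrite big_nat_cond; apply: rpred_sum => j /andP[/andP[hj _] _].
by apply: term_div; apply: h.
Qed.


Lemma not3_mul (n' : nat) (u : int) : coprime 3 n' -> ~~ (3 %| u)%Z -> ~~ (3 %| n'%:Z * u)%Z.
Proof.
rewrite prime_coprime // => h1 h2.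
by rewrite dvdzE abszM absz_nat Euclid_dvdM // negb_or h1 -(absz_nat 3) -dvdzE.
Qed.

Lemma lin_val t e (y : nat -> int) (u : int) n :
  (0 < n)%N -> (forall j, (2 <= j)%N -> (t + e + 1 + j <= t * j + 2)%N) ->
  y 0%N = 1 -> y 1%N = 3 ^+ e * u -> ~~ (3 %| u)%Z ->
  let f := \sum_(j < n.+1) (3 ^+ (t * j) * y j) *+ 'C(n, j) - 1 in
  f != 0 /\ logn 3 `|f| = (logn 3 n + t + e)%N.
Proof.
move=> npos hte y0 y1 hu f.
have [n' cop hn] := pfactor_coprime (isT : prime 3) npos.
set k := logn 3 n in hn *.
apply: (@val_split (k + t + e) f (n'%:Z * u)
   (\sum_(2 <= j < n.+1) (3 ^+ (t * j) * y j) *+ 'C(n, j))).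
- exact: not3_mul.
- rewrite -pow3_nat; apply: tail_div => j hj.
  have := @key_lin t e k n j hj _ (hte j hj); rewrite addn1; apply.
  by rewrite hn dvdn_mull.
- rewrite /f -(big_mkord xpredT (fun j => (3 ^+ (t * j) * y j) *+ 'C(n, j))) big_ltn // big_ltn // y0 y1 bin0 bin1 muln0 muln1 expr0.
  have hnR : (n%:R : int) = n'%:R * 3 ^+ k by rewrite {1}hn natrM natrX.
  rewrite -[_ *+ n]mulr_natr hnR mulr1n !exprD. rewrite -[(n' : int)]natz. ring.
Qed.

Lemma quad_val (y : nat -> int) (u : int) n :
  (2 <= n)%N -> y 0%N = 1 -> y 1%N = 0 -> y 2%N = u -> ~~ (3 %| u)%Z ->
  let f := \sum_(j < n.+1) (3 ^+ (2 * j) * y j) *+ 'C(n, j) - 1 in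
  f != 0 /\ logn 3 `|f| = (logn 3 (n * n.-1) + 4)%N.
Proof.
move=> n2 y0 y1 y2 hu f.
have Cpos : (0 < 'C(n, 2))%N by rewrite bin_gt0.
have [w cop hw] := pfactor_coprime (isT : prime 3) Cpos.
have hC : logn 3 'C(n, 2) = logn 3 (n * n.-1).
  have h2C : forall m, (2 <= m)%N -> (m * m.-1 = 2 * 'C(m, 2))%N.
    by case=> [|m] // _; rewrite -mul_bin_diag bin1.
  rewrite h2C //.
  by rewrite logn_Gauss.
set k := logn 3 (n * n.-1) in hC *.
apply: (@val_split (k + 4) f (w%:Z * u)
   (\sum_(3 <= j < n.+1) (3 ^+ (2 * j) * y j) *+ 'C(n, j))).
- exact: not3_mul.
- rewrite -pow3_nat; apply: tail_div => j hj.
  have := @key_quad k n j hj (pfactor_dvdnn _ _); rewrite addnS addn4; apply.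
- have n1 : (0 < n)%N by lia.
  rewrite /f -(big_mkord xpredT (fun j => (3 ^+ (2 * j) * y j) *+ 'C(n, j))) big_ltn // big_ltn // big_ltn // y0 y1 y2 bin0 bin1 muln0 expr0.
  have hwR : ('C(n, 2)%:R : int) = w%:R * 3 ^+ k by rewrite {1}hw hC natrM natrX.
  rewrite -[_ *+ 'C(n, 2)]mulr_natr hwR mulr1n mulr0 mul0rn exprD -[(w : int)]natz; ring.
Qed.

Lemma nar_pos s t Cf
  (hT : forall w, T s w = w + sc (3 ^+ t) (Cf w))
  (hCadd : forall a b, Cf (a + b) = Cf a + Cf b)
  (hCsc : forall c w, Cf (sc c w) = sc c (Cf w)) b v n :
  T b (0, 1, 1) = v ->
  (narayana (s * n + b))%:Z = \sum_(j < n.+1) (3 ^+ (t * j) * (iter j Cf v).1.1) *+ 'C(n, j).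
Proof.
move=> hb; rewrite nar_T /T iterD -/(T (s * n) _) -/(T b _) hb.
exact: expand.
Qed.

Lemma nar_neg s t Cf
  (hT : forall w, T s w = w + sc (3 ^+ t) (Cf w))
  (hCadd : forall a b, Cf (a + b) = Cf a + Cf b)
  (hCsc : forall c w, Cf (sc c w) = sc c (Cf w)) R v i n :
  T R v = (0, 1, 1) -> (i + R = s * n)%N ->
  (narayana i)%:Z = \sum_(j < n.+1) (3 ^+ (t * j) * (iter j Cf v).1.1) *+ 'C(n, j).
Proof.
move=> hR hiR; rewrite nar_T -hR /T -iterD hiR -/(T (s * n) _).
exact: expand.
Qed.

Lemma v3_val (f : int) m : f != 0 -> logn 3 `|f| = m -> v3 f = Some m.
Proof. by move=> h1 h2; rewrite /v3 (negbTE h1) h2. Qed.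

Lemma v3_nat m : (0 < m)%N -> v3 m%:Z = Some (logn 3 m).
Proof. by move=> h; rewrite /v3 absz_nat; case: m h. Qed.

Lemma const_val t (y : nat -> int) n c : (0 < t)%N -> ~~ (3 %| y 0%N - c)%Z ->
  let f := \sum_(j < n.+1) (3 ^+ (t * j) * y j) *+ 'C(n, j) - c in
  f != 0 /\ logn 3 `|f| = 0%N.
Proof.
move=> ht hy f.
apply: (@val_split 0 f (y 0%N - c) (\sum_(1 <= j < n.+1) (3 ^+ (t * j) * y j) *+ 'C(n, j))) => //.
- rewrite -pow3_nat; apply: tail_div => j hj.
  by apply: dvdn_mull; rewrite expn1; apply: dvdn_exp; [lia | apply: dvdnn].
- rewrite /f -(big_mkord xpredT (fun j => (3 ^+ (t * j) * y j) *+ 'C(n, j))) big_ltn //.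
  rewrite bin0 muln0 expr0 mulr1n; ring.
Qed.

Lemma c10_val (y : nat -> int) n c w : (3 %| y 1%N)%Z -> y 0%N - c = 9 * w -> ~~ (3 %| w)%Z ->
  let f := \sum_(j < n.+1) (3 ^+ (2 * j) * y j) *+ 'C(n, j) - c in
  f != 0 /\ logn 3 `|f| = 2%N.
Proof.
move=> h1 hy hw f.
apply: (@val_split 2 f w (\sum_(1 <= j < n.+1) (3 ^+ (2 * j) * y j) *+ 'C(n, j))) => //.
- have [n0|npos] := posnP n.
    by rewrite n0 big_geq.
  rewrite big_ltn //; apply: rpredD.
    case/dvdzP: h1 => q hq; rewrite hq muln1 -mulr_natr bin1.
    by apply/dvdzP; exists (q * n%:R); ring.
  have := @tail_div 2 y n 2 (3 ^ 3) _; rewrite pow3_nat; apply => j hj.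
  apply: dvdn_mull; apply: dvdn_exp2l; lia.
- rewrite /f -(big_mkord xpredT (fun j => (3 ^+ (2 * j) * y j) *+ 'C(n, j))) big_ltn //.
  rewrite bin0 muln0 expr0 mulr1n mul1r.
  have hy0 : y 0%N = 9 * w + c by rewrite -hy; ring.
  rewrite hy0; ring.
Qed.

Lemma L_const8 b v n : T b (0, 1, 1) = v -> ~~ (3 %| v.1.1 - 1)%Z ->
  v3 ((narayana (8 * n + b))%:Z - 1) = Some 0%N.
Proof.
move=> hb hv; rewrite (@nar_pos _ _ _ T8 Cf8_add Cf8_sc _ _ n hb).
have [h1 h2] := @const_val 1 (fun j => (iter j Cf8 v).1.1) n 1 isT hv.
by apply: v3_val.
Qed.

Lemma L_lin8_pos b v n u : T b (0, 1, 1) = v -> (0 < n)%N -> v.1.1 = 1 ->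
  (Cf8 v).1.1 = u -> ~~ (3 %| u)%Z ->
  v3 ((narayana (8 * n + b))%:Z - 1) = Some (logn 3 n + 1)%N.
Proof.
move=> hb hn hv1 hu hu3; rewrite (@nar_pos _ _ _ T8 Cf8_add Cf8_sc _ _ n hb).
have hy1 : (iter 1 Cf8 v).1.1 = 3 ^+ 0 * u by rewrite /= hu expr0 mul1r.
have hte : forall j, (2 <= j)%N -> (1 + 0 + 1 + j <= 1 * j + 2)%N by move=> j hj; lia.
have [h1 h2] := @lin_val 1 0 (fun j => (iter j Cf8 v).1.1) u n hn hte hv1 hy1 hu3.
by rewrite addn0 in h2; apply: v3_val.
Qed.

Lemma L_lin8_neg R v i n u : T R v = (0, 1, 1) -> (i + R = 8 * n)%N -> (0 < n)%N -> v.1.1 = 1 ->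
  (Cf8 v).1.1 = u -> ~~ (3 %| u)%Z ->
  v3 ((narayana i)%:Z - 1) = Some (logn 3 n + 1)%N.
Proof.
move=> hR hiR hn hv1 hu hu3; rewrite (@nar_neg _ _ _ T8 Cf8_add Cf8_sc _ _ _ _ hR hiR).
have hy1 : (iter 1 Cf8 v).1.1 = 3 ^+ 0 * u by rewrite /= hu expr0 mul1r.
have hte : forall j, (2 <= j)%N -> (1 + 0 + 1 + j <= 1 * j + 2)%N by move=> j hj; lia.
have [h1 h2] := @lin_val 1 0 (fun j => (iter j Cf8 v).1.1) u n hn hte hv1 hy1 hu3.
by rewrite addn0 in h2; apply: v3_val.
Qed.

Lemma L_lin24_pos b v n u : T b (0, 1, 1) = v -> (0 < n)%N -> v.1.1 = 1 ->
  (Cf24 v).1.1 = 3 * u -> ~~ (3 %| u)%Z ->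
  v3 ((narayana (24 * n + b))%:Z - 1) = Some (logn 3 n + 3)%N.
Proof.
move=> hb hn hv1 hu hu3; rewrite (@nar_pos _ _ _ T24 Cf24_add Cf24_sc _ _ n hb).
have hy1 : (iter 1 Cf24 v).1.1 = 3 ^+ 1 * u by rewrite /= hu expr1.
have hte : forall j, (2 <= j)%N -> (2 + 1 + 1 + j <= 2 * j + 2)%N by move=> j hj; lia.
have [h1 h2] := @lin_val 2 1 (fun j => (iter j Cf24 v).1.1) u n hn hte hv1 hy1 hu3.
by rewrite -addnA in h2; apply: v3_val.
Qed.

Lemma L_lin24_neg R v i n u : T R v = (0, 1, 1) -> (i + R = 24 * n)%N -> (0 < n)%N -> v.1.1 = 1 ->
  (Cf24 v).1.1 = 3 * u -> ~~ (3 %| u)%Z ->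
  v3 ((narayana i)%:Z - 1) = Some (logn 3 n + 3)%N.
Proof.
move=> hR hiR hn hv1 hu hu3; rewrite (@nar_neg _ _ _ T24 Cf24_add Cf24_sc _ _ _ _ hR hiR).
have hy1 : (iter 1 Cf24 v).1.1 = 3 ^+ 1 * u by rewrite /= hu expr1.
have hte : forall j, (2 <= j)%N -> (2 + 1 + 1 + j <= 2 * j + 2)%N by move=> j hj; lia.
have [h1 h2] := @lin_val 2 1 (fun j => (iter j Cf24 v).1.1) u n hn hte hv1 hy1 hu3.
by rewrite -addnA in h2; apply: v3_val.
Qed.

Lemma L_quad R v i n : T R v = (0, 1, 1) -> (i + R = 24 * n)%N -> (2 <= n)%N -> v.1.1 = 1 ->
  (Cf24 v).1.1 = 0 -> ~~ (3 %| (Cf24 (Cf24 v)).1.1)%Z ->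
  v3 ((narayana i)%:Z - 1) = Some (logn 3 (n * n.-1) + 4)%N.
Proof.
move=> hR hiR hn hv1 hv2 hu3; rewrite (@nar_neg _ _ _ T24 Cf24_add Cf24_sc _ _ _ _ hR hiR).
have [h1 h2] := @quad_val (fun j => (iter j Cf24 v).1.1) _ n hn hv1 hv2 erefl hu3.
by apply: v3_val.
Qed.

Lemma L_c10 n : v3 ((narayana (24 * n + 10))%:Z - 1) = Some 2%N.
Proof.
rewrite (@nar_pos _ _ _ T24 Cf24_add Cf24_sc 10 (19, 28, 41) n erefl).
have [h1 h2] := @c10_val (fun j => (iter j Cf24 (19, 28, 41)).1.1) n 1 2 isT erefl isT.
by apply: v3_val.
Qed.

Lemma logn8 m : logn 3 (8 * m) = logn 3 m.
Proof. by rewrite logn_Gauss. Qed.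

Lemma logn24 m : (0 < m)%N -> logn 3 (24 * m) = (logn 3 m).+1.
Proof.
move=> hm; rewrite (_ : 24 * m = 3 * (8 * m))%N; last by lia.
by rewrite lognM // ?logn8 //; lia.
Qed.

Lemma logn576 m : (0 < m)%N -> logn 3 (576 * m) = (logn 3 m + 2)%N.
Proof.
move=> hm; rewrite (_ : 576 * m = 64 * (9 * m))%N; last by lia.
rewrite logn_Gauss // lognM //.
by rewrite (_ : logn 3 9 = 2%N) // addnC.
Qed.

Theorem theorem3p5 (i : nat) : (1 <= i)%N ->
  let a := ((narayana i)%:Z - 1)%R in
  let z := (i%:Z)%R in
  (((i %% 8 == 0) || (i %% 8 == 4) || (i %% 8 == 5) || (i %% 8 == 7))%N ->
      v3 a = Some 0%N) /\
  ((i %% 8 == 1)%N -> v3 a = vadd (v3 (z - 1)) 1) /\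
  ((i %% 8 == 6)%N -> v3 a = vadd (v3 (z + 2)) 1) /\
  ((i %% 24 == 2)%N -> v3 a = vadd (v3 (z - 2)) 2) /\
  ((i %% 24 == 10)%N -> v3 a = Some 2%N) /\
  ((i %% 24 == 18)%N -> v3 a = vadd (v3 ((z + 6) * (z + 30))) 2) /\
  ((i %% 24 == 3)%N -> v3 a = vadd (v3 (z - 3)) 2) /\
  ((i %% 24 == 11)%N -> v3 a = vadd (v3 (z + 13)) 2) /\
  ((i %% 24 == 19)%N -> v3 a = vadd (v3 (z + 5)) 2).
Proof.
move=> hi; cbv zeta.
split; [|split; [|split; [|split; [|split; [|split; [|split; [|split]]]]]]].
- case/orP=> [/orP[/orP[]|]|] /eqP hr.
  + rewrite (_ : i = 8 * (i %/ 8) + 0)%N; last by lia.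
    by apply: (@L_const8 0 (0, 1, 1)).
  + rewrite (_ : i = 8 * (i %/ 8) + 4)%N; last by lia.
    by apply: (@L_const8 4 (2, 3, 4)).
  + rewrite (_ : i = 8 * (i %/ 8) + 5)%N; last by lia.
    by apply: (@L_const8 5 (3, 4, 6)).
  + rewrite (_ : i = 8 * (i %/ 8) + 7)%N; last by lia.
    by apply: (@L_const8 7 (6, 9, 13)).
- move=> /eqP hr; have [n0|npos] := posnP (i %/ 8).
    by rewrite (_ : i = 1%N); [vm_compute | lia].
  rewrite (_ : i%:Z - 1 = (8 * (i %/ 8))%N%:Z); last by lia.
  rewrite {1}(_ : i = 8 * (i %/ 8) + 1)%N; last by lia.
  rewrite (@L_lin8_pos 1 (1, 1, 1) _ 4) // v3_nat; last by lia.
  by rewrite logn8.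
- move=> /eqP hr.
  rewrite (_ : i%:Z + 2 = (8 * (i %/ 8 + 1))%N%:Z); last by lia.
  rewrite (@L_lin8_neg 2 (1, 0, 0) i (i %/ 8 + 1) 1) //; try lia.
  by rewrite v3_nat ?logn8 //; lia.
- move=> /eqP hr; have [n0|npos] := posnP (i %/ 24).
    by rewrite (_ : i = 2%N); [vm_compute | lia].
  rewrite (_ : i%:Z - 2 = (24 * (i %/ 24))%N%:Z); last by lia.
  rewrite {1}(_ : i = 24 * (i %/ 24) + 2)%N; last by lia.
  rewrite (@L_lin24_pos 2 (1, 1, 2) _ 320) // v3_nat; last by lia.
  by rewrite logn24 //= addn2 addn3.
- move=> /eqP hr.
  rewrite (_ : i = 24 * (i %/ 24) + 10)%N; last by lia.
  exact: L_c10.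
- move=> /eqP hr.
  set n := (i %/ 24 + 2)%N.
  rewrite (_ : (i%:Z + 6) * (i%:Z + 30) = (576 * (n * n.-1))%N%:Z); last first.
    rewrite (_ : i%:Z + 6 = (24 * n.-1)%N%:Z); last by rewrite /n; lia.
    rewrite (_ : i%:Z + 30 = (24 * n)%N%:Z); last by rewrite /n; lia.
    by rewrite -PoszM mulnACA [(n.-1 * n)%N]mulnC.
  rewrite (@L_quad 30 (1, 136, -64) i n) //; try (rewrite /n; lia).
  rewrite v3_nat; last by rewrite /n !muln_gt0; lia.
  rewrite logn576 /=; last by rewrite /n !muln_gt0; lia.
  by rewrite -addnA.
- move=> /eqP hr; have [n0|npos] := posnP (i %/ 24).
    by rewrite (_ : i = 3%N); [vm_compute | lia].
  rewrite (_ : i%:Z - 3 = (24 * (i %/ 24))%N%:Z); last by lia.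
  rewrite {1}(_ : i = 24 * (i %/ 24) + 3)%N; last by lia.
  rewrite (@L_lin24_pos 3 (1, 2, 3) _ 469) // v3_nat; last by lia.
  by rewrite logn24 //= addn2 addn3.
- move=> /eqP hr.
  rewrite (_ : i%:Z + 13 = (24 * (i %/ 24 + 1))%N%:Z); last by lia.
  rewrite (@L_lin24_neg 13 (1, 5, -3) i (i %/ 24 + 1) 1) //; try lia.
  by rewrite v3_nat ?logn24 /= ?addn2 ?addn3 //; lia.
- move=> /eqP hr.
  rewrite (_ : i%:Z + 5 = (24 * (i %/ 24 + 1))%N%:Z); last by lia.
  rewrite (@L_lin24_neg 5 (1, -1, 0) i (i %/ 24 + 1) 22) //; try lia.
  by rewrite v3_nat ?logn24 /= ?addn2 ?addn3 //; lia.
Qed.
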